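(* Let $r>0$ and $A\in\mathrm{GL}(2,\mathbb{R})$. There exists $s_0$ such that for all $s\ge s_0$, for every $\Gamma\in\mathcal{H}$ and every non-empty compact $K\subseteq\mathbb{R}^2$ with $K\in\mathcal{LA}_s(\Gamma)$, we have $A(K)\in\mathcal{LA}_r(A(\Gamma))$.
   Context: $d_H$ is the Hausdorff distance. $\mathcal{H}$ is the set of homothety types: non-empty compact subsets of $\mathbb{R}^2$ modulo the group generated by translations and homotheties of positive ratio; $A(\Gamma)$ is the homothety type of $A(\hat\Gamma)$ for any $\hat\Gamma\in\Gamma$. For $r>0$, $\Gamma\in\mathcal{H}$ and non-empty compact $K$, $K\in\mathcal{LA}_r(\Gamma)$ ($K$ is an $r$-large approximate of $\Gamma$) means $\mathrm{diam}(K)>r$ and there is $\hat\Gamma\in\Gamma$ of diameter $1$ with $d_H(K/\mathrm{diam}(K),\hat\Gamma)<1/r$. *)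

(* Defs.v *)
From HB Require Import structures.
From mathcomp Require Import all_boot all_order all_algebra.
From mathcomp Require Import all_classical all_reals all_analysis.
Set Implicit Arguments. Unset Strict Implicit. Unset Printing Implicit Defensive.
Import Order.TTheory GRing.Theory Num.Theory.
Import numFieldNormedType.Exports.
Local Open Scope classical_set_scope.
Local Open Scope ring_scope.

Section Plane.
Variable R : realType.

Definition edist (p q : R * R) : R :=
  Num.sqrt ((p.1 - q.1) ^+ 2 + (p.2 - q.2) ^+ 2).

(* Non-empty compact subsets of R^2 (product = Euclidean topology). *)
Definition ncompact (K : set (R * R)) : Prop := K !=set0 /\ compact K.

Definition diam (K : set (R * R)) : R :=
  sup [set edist x y | x in K & y in K].

Definition pdist (x : R * R) (L : set (R * R)) : R :=
  inf [set edist x y | y in L].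

Definition dH (K L : set (R * R)) : R :=
  Num.max (sup [set pdist x L | x in K]) (sup [set pdist y K | y in L]).

Definition homot (l : R) (t : R * R) (p : R * R) : R * R :=
  (l * p.1 + t.1, l * p.2 + t.2).

Definition scale (c : R) (K : set (R * R)) : set (R * R) :=
  [set (c * p.1, c * p.2) | p in K].

Definition htclass (K0 : set (R * R)) : set (set (R * R)) :=
  [set K | exists l t, 0 < l /\ K = homot l t @` K0].

Definition homothety_type (G : set (set (R * R))) : Prop :=
  exists K0, ncompact K0 /\ G = htclass K0.

Definition mact (A : 'M[R]_2) (p : R * R) : R * R :=
  (A 0 0 * p.1 + A 0 1 * p.2, A 1 0 * p.1 + A 1 1 * p.2).

(* A(Gamma): the homothety type of A(Gamma_hat) for (any) Gamma_hat in Gamma *)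
Definition img_type (A : 'M[R]_2) (G : set (set (R * R))) : set (set (R * R)) :=
  [set L | exists Gh, G Gh /\ htclass (mact A @` Gh) L].

Definition LA (r : R) (G : set (set (R * R))) (K : set (R * R)) : Prop :=
  diam K > r /\
  exists Gh, G Gh /\ diam Gh = 1 /\ dH (scale (diam K)^-1 K) Gh < r^-1.

End Plane.

(* Main.v *)
Require Import Defs.
From HB Require Import structures.
From mathcomp Require Import all_boot all_order all_algebra.
From mathcomp Require Import all_classical all_reals all_analysis.
From mathcomp Require Import ring lra.
Import Order.TTheory GRing.Theory Num.Theory.
Import numFieldNormedType.Exports.
Local Open Scope classical_set_scope.
Local Open Scope ring_scope.

Set Implicit Arguments.
Section S.
Variable R : realType.
Implicit Types (a b c d : R) (p q x y : R * R) (X Y K L : set (R * R)).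

Local Notation ed := Defs.edist.
Definition nrm a b := Num.sqrt (a ^+ 2 + b ^+ 2).

Lemma nrm_ge0 a b : 0 <= nrm a b. Proof. exact: sqrtr_ge0. Qed.

Lemma nrm_sq a b : nrm a b ^+ 2 = a ^+ 2 + b ^+ 2.
Proof. by rewrite sqr_sqrtr // addr_ge0 // sqr_ge0. Qed.

Lemma nrm_tri a b c d : nrm (a + c) (b + d) <= nrm a b + nrm c d.
Proof.
have u0 := nrm_ge0 a b; have v0 := nrm_ge0 c d.
have hu := nrm_sq a b; have hv := nrm_sq c d.
rewrite /nrm -[X in _ <= X]ger0_norm ?addr_ge0 // -sqrtr_sqr ler_sqrt ?sqr_ge0 //.
rewrite -/(nrm a b) -/(nrm c d).
set u := nrm a b in u0 hu *; set v := nrm c d in v0 hv *.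
have h : (a * c + b * d) <= u * v.
  have h1 : (a * c + b * d) ^+ 2 <= (u * v) ^+ 2.
    rewrite exprMn hu hv; have := sqr_ge0 (a * d - b * c); nra.
  have : 0 <= u * v by apply: mulr_ge0.
  nra.
nra.
Qed.

Lemma nrm_scale c a b : nrm (c * a) (c * b) = `|c| * nrm a b.
Proof.
rewrite /nrm !exprMn -mulrDr sqrtrM ?sqr_ge0 // sqrtr_sqr //.
Qed.

Lemma edistE p q : ed p q = nrm (p.1 - q.1) (p.2 - q.2). Proof. by []. Qed.

Lemma edist_ge0 p q : 0 <= ed p q. Proof. exact: nrm_ge0. Qed.

Lemma edist_sym p q : ed p q = ed q p.
Proof. by rewrite !edistE /nrm -(sqrrN (p.1 - _)) -(sqrrN (p.2 - _)) !opprB. Qed.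

Lemma edist_tri p q (z : R * R) : ed p z <= ed p q + ed q z.
Proof.
rewrite !edistE.
have -> : p.1 - z.1 = (p.1 - q.1) + (q.1 - z.1) by ring.
have -> : p.2 - z.2 = (p.2 - q.2) + (q.2 - z.2) by ring.
exact: nrm_tri.
Qed.

Definition sc c p : R * R := (c * p.1, c * p.2).

Lemma edist_sc c p q : ed (sc c p) (sc c q) = `|c| * ed p q.
Proof.
rewrite !edistE /= -nrm_scale; congr nrm; ring.
Qed.

Lemma edist_homot l t p q : 0 < l -> ed (homot l t p) (homot l t q) = l * ed p q.
Proof.
move=> l0; rewrite !edistE /= -[l in RHS]gtr0_norm // -nrm_scale; congr nrm; ring.
Qed.

Lemma key_ineq al be P Q P0 :
  ed (sc al P) (homot be (al * P0.1 - be * P0.1, al * P0.2 - be * P0.2) Q)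
  <= `|al| * ed P Q + `|al - be| * ed Q P0.
Proof.
rewrite !edistE /= -!nrm_scale.
have -> : al * P.1 - (be * Q.1 + (al * P0.1 - be * P0.1)) =
  al * (P.1 - Q.1) + (al - be) * (Q.1 - P0.1) by ring.
have -> : al * P.2 - (be * Q.2 + (al * P0.2 - be * P0.2)) =
  al * (P.2 - Q.2) + (al - be) * (Q.2 - P0.2) by ring.
exact: nrm_tri.
Qed.

Definition frob (A : 'M[R]_2) := A 0 0 ^+ 2 + A 0 1 ^+ 2 + A 1 0 ^+ 2 + A 1 1 ^+ 2.

Lemma mact_lip (A : 'M[R]_2) p q :
  ed (mact A p) (mact A q) <= Num.sqrt (frob A) * ed p q.
Proof.
have f0 : 0 <= frob A by rewrite /frob !addr_ge0 // sqr_ge0.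
rewrite !edistE /nrm -sqrtrM // ler_sqrt; last by rewrite mulr_ge0 // addr_ge0 // sqr_ge0.
rewrite /= /frob.
set u := p.1 - q.1; set v := p.2 - q.2.
have -> : A 0 0 * p.1 + A 0 1 * p.2 - (A 0 0 * q.1 + A 0 1 * q.2) = A 0 0 * u + A 0 1 * v by rewrite /u /v; ring.
have -> : A 1 0 * p.1 + A 1 1 * p.2 - (A 1 0 * q.1 + A 1 1 * q.2) = A 1 0 * u + A 1 1 * v by rewrite /u /v; ring.
have h1 := sqr_ge0 (A 0 0 * v - A 0 1 * u).
have h2 := sqr_ge0 (A 1 0 * v - A 1 1 * u).
nra.
Qed.

Lemma inv_eqs (A : 'M[R]_2) (hA : A \in unitmx) :
  let B := invmx A in
  B 0 0 * A 0 0 + B 0 1 * A 1 0 = 1 /\ B 0 0 * A 0 1 + B 0 1 * A 1 1 = 0 /\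
  B 1 0 * A 0 0 + B 1 1 * A 1 0 = 0 /\ B 1 0 * A 0 1 + B 1 1 * A 1 1 = 1.
Proof.
move=> B; have E := mulVmx hA.
have e := fun i j => congr1 (fun M : 'M[R]_2 => M i j) E.
have o0 : (ord0 : 'I_2) = 0 by apply/val_inj.
have o1 : (lift ord0 ord0 : 'I_2) = 1 by apply/val_inj.
move: (e 0 0) (e 0 1) (e 1 0) (e 1 1); rewrite !mxE !big_ord_recl !big_ord0 !addr0 o0 o1 /=.
by move=> -> -> -> ->.
Qed.

Lemma mact_inv (A : 'M[R]_2) (hA : A \in unitmx) p :
  mact (invmx A) (mact A p) = p.
Proof.
have [e1 [e2 [e3 e4]]] := inv_eqs A hA.
case: p => x y; rewrite /mact /=; congr pair.
  have -> : invmx A 0 0 * (A 0 0 * x + A 0 1 * y) + invmx A 0 1 * (A 1 0 * x + A 1 1 * y)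
    = (invmx A 0 0 * A 0 0 + invmx A 0 1 * A 1 0) * x + (invmx A 0 0 * A 0 1 + invmx A 0 1 * A 1 1) * y by ring.
  by rewrite e1 e2; ring.
have -> : invmx A 1 0 * (A 0 0 * x + A 0 1 * y) + invmx A 1 1 * (A 1 0 * x + A 1 1 * y)
  = (invmx A 1 0 * A 0 0 + invmx A 1 1 * A 1 0) * x + (invmx A 1 0 * A 0 1 + invmx A 1 1 * A 1 1) * y by ring.
by rewrite e3 e4; ring.
Qed.

Lemma mact_sc (A : 'M[R]_2) c p : mact A (sc c p) = sc c (mact A p).
Proof. rewrite /mact /sc /=; congr pair; ring. Qed.


Definition dset (X : set (R * R)) := [set ed x y | x in X & y in X].
Definition bnd X := has_ubound (dset X).

Lemma diamE X : diam X = sup (dset X). Proof. by []. Qed.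

Lemma dset_in X x y : X x -> X y -> dset X (ed x y).
Proof. by move=> hx hy; exists x => //; exists y. Qed.

Lemma diam_ub X x y : bnd X -> X x -> X y -> ed x y <= diam X.
Proof. by move=> hb hx hy; rewrite diamE; apply: ub_le_sup => //; apply: dset_in. Qed.

Lemma diam_le X b : X !=set0 -> (forall x y, X x -> X y -> ed x y <= b) -> diam X <= b.
Proof.
move=> [x0 hx0] h; rewrite diamE; apply: ge_sup.
  by exists (ed x0 x0); apply: dset_in.
by move=> _ [x hx [y hy <-]]; apply: h.
Qed.

Lemma bnd_of X b : (forall x y, X x -> X y -> ed x y <= b) -> bnd X.
Proof. by move=> h; exists b => _ [x hx [y hy <-]]; apply: h. Qed.

Lemma diam_pos X : 0 < diam X -> X !=set0 /\ bnd X.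
Proof.
move=> h.
have hs : has_sup (dset X).
  apply: contrapT => hn; move: h; rewrite diamE sup_out //; by rewrite ltxx.
case: hs => [[_ [x hx _]] hu]; split => //; by exists x.
Qed.

Lemma bnd_img (f : R * R -> R * R) M X : (forall p q, ed (f p) (f q) <= M * ed p q) ->
  0 <= M -> bnd X -> bnd (f @` X).
Proof.
move=> hf hM [b hb]; apply: (@bnd_of _ (M * b)) => _ _ [x hx <-] [y hy <-].
apply: (le_trans (hf x y)); rewrite ler_wpM2l //; apply: hb; exact: dset_in.
Qed.

Lemma diam_img_le (f : R * R -> R * R) M X : (forall p q, ed (f p) (f q) <= M * ed p q) ->
  0 <= M -> X !=set0 -> bnd X -> diam (f @` X) <= M * diam X.
Proof.
move=> hf hM [x0 h0] hb; apply: diam_le; first by exists (f x0); exists x0.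
move=> _ _ [x hx <-] [y hy <-].
apply: (le_trans (hf x y)); rewrite ler_wpM2l //; exact: diam_ub.
Qed.

Lemma diam_img_ge (f : R * R -> R * R) N X : (forall p q, ed p q <= N * ed (f p) (f q)) ->
  0 <= N -> X !=set0 -> bnd (f @` X) -> diam X <= N * diam (f @` X).
Proof.
move=> hf hN hX hb; apply: diam_le => // x y hx hy.
apply: (le_trans (hf x y)); rewrite ler_wpM2l //; apply: diam_ub => //.
Qed.

Lemma pdist_le x L y : L y -> pdist x L <= ed x y.
Proof.
move=> hy; apply: ge_inf; last by exists y.
by exists 0 => _ [z _ <-]; apply: edist_ge0.
Qed.

Lemma pdist_lt x L e : L !=set0 -> pdist x L < e -> exists2 y, L y & ed x y < e.
Proof.
move=> [y0 h0] /inf_lt []; first by exists (ed x y0); exists y0.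
by move=> _ [y hy <-] h; exists y.
Qed.

Lemma dH_sym K L : dH K L = dH L K.
Proof. by rewrite /dH maxC. Qed.

Lemma dH_lt K L e : L !=set0 -> bnd K -> dH K L < e ->
  forall x, K x -> exists2 y, L y & ed x y < e.
Proof.
move=> hL hb hd x hx; apply: pdist_lt => //.
case: hL => y0 hy0.
have hS : has_ubound [set pdist z L | z in K].
  exists (diam K + ed x y0) => _ [z hz <-].
  apply: (le_trans (pdist_le z L y0 hy0)); apply: (le_trans (edist_tri z x y0)).
  by rewrite lerD2r; apply: diam_ub.
apply: le_lt_trans hd; rewrite /dH le_max; apply/orP; left.
by apply: ub_le_sup => //; exists x.
Qed.

Lemma dH_le K L e : K !=set0 -> L !=set0 ->
  (forall x, K x -> exists2 y, L y & ed x y <= e) ->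
  (forall y, L y -> exists2 x, K x & ed y x <= e) -> dH K L <= e.
Proof.
move=> [x0 h0] [y0 h1] hK hL; rewrite /dH ge_max; apply/andP; split.
  apply: ge_sup; first by exists (pdist x0 L); exists x0.
  move=> _ [x hx <-]; have [y hy hxy] := hK x hx.
  exact: le_trans (pdist_le x L y hy) hxy.
apply: ge_sup; first by exists (pdist y0 K); exists y0.
move=> _ [y hy <-]; have [x hx hxy] := hL y hy.
exact: le_trans (pdist_le y K x hx) hxy.
Qed.

Lemma close_diam X Y e : X !=set0 -> bnd Y ->
  (forall x, X x -> exists2 y, Y y & ed x y <= e) -> diam X <= diam Y + e + e.
Proof.
move=> hX hY h; apply: diam_le => // x1 x2 h1 h2.
have [y1 hy1 e1] := h x1 h1; have [y2 hy2 e2] := h x2 h2.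
have t1 := edist_tri x1 y1 x2; have t2 := edist_tri y1 y2 x2.
have d := @diam_ub Y y1 y2 hY hy1 hy2.

rewrite (edist_sym y2) in t2.

have := edist_sym x1 y1. lra.
Qed.


Lemma diam_img_eq (f : R * R -> R * R) c X : (forall p q, ed (f p) (f q) = c * ed p q) ->
  0 < c -> X !=set0 -> bnd X -> diam (f @` X) = c * diam X.
Proof.
move=> hf hc hX hb; apply/eqP; rewrite eq_le; apply/andP; split.
  apply: diam_img_le => //; last exact: ltW.
  by move=> p q; rewrite hf.
have hb' : bnd (f @` X) by apply: (@bnd_img f c X) => //; [move=> p q; rewrite hf | exact: ltW].
have := @diam_img_ge f c^-1 X.
have h1 : forall p q, ed p q <= c^-1 * ed (f p) (f q).
  by move=> p q; rewrite hf mulrA mulVf ?mul1r // gt_eqF.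
move=> /(_ h1 _ hX hb'); rewrite invr_ge0 ltW // => /(_ isT) h.
have hci : 0 < c^-1 by rewrite invr_gt0.
by rewrite -(ler_pM2l hci) mulrA mulVf ?mul1r // gt_eqF.
Qed.

Lemma sc_sc a b p : sc a (sc b p) = sc (a * b) p.
Proof. by rewrite /sc /=; congr pair; ring. Qed.

Lemma img_sc_comm (A : 'M[R]_2) c X : mact A @` (sc c @` X) = sc c @` (mact A @` X).
Proof.
apply/seteqP; split.
  by move=> _ [_ [x hx <-] <-]; exists (mact A x); [exists x | rewrite mact_sc].
by move=> _ [_ [x hx <-] <-]; exists (sc c x); [exists x | rewrite mact_sc].
Qed.

End S.
Arguments sc {R}. Arguments frob {R}. Arguments mact_lip {R}. Arguments mact_inv {R}.
Arguments diam_pos {R}. Arguments dH_le {R}. Arguments key_ineq {R}. Arguments edist_tri {R}.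
Arguments img_sc_comm {R}. Arguments sc_sc {R}. Arguments edist_sc {R}. Arguments edist_homot {R}.
Arguments edist_sym {R}. Arguments edist_ge0 {R}. Arguments nrm {R}. Arguments dset {R}. Arguments bnd {R}.
Arguments pdist_le {R}. Arguments pdist_lt {R}. Arguments dH_sym {R}. Arguments bnd_of {R}. Arguments diamE {R}.
Arguments mact_sc {R}. Arguments inv_eqs {R}.
Unset Implicit Arguments.
Local Notation ed := Defs.edist.

Theorem mainTheorem6 (R : realType) (r : R) (hr : 0 < r)
  (A : 'M[R]_2) (hA : A \in unitmx) :
  exists s0 : R, forall s : R, s0 <= s ->
    forall (G : set (set (R * R))) (K : set (R * R)),
      homothety_type G -> ncompact K -> LA s G K ->
      LA r (img_type A G) (mact A @` K).
Proof.
set T := mact A.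
set M := Num.sqrt (frob A) + 1.
set N := Num.sqrt (frob (invmx A)) + 1.
have M1 : 1 <= M by rewrite /M lerDr sqrtr_ge0.
have N1 : 1 <= N by rewrite /N lerDr sqrtr_ge0.
have hT1 : forall p q, ed (T p) (T q) <= M * ed p q.
  move=> p q; apply: (le_trans (mact_lip _ _ _)).
  by have := edist_ge0 p q; rewrite /M; nra.
have hT2 : forall p q, ed p q <= N * ed (T p) (T q).
  move=> p q; rewrite -{1}(mact_inv A hA p) -{1}(mact_inv A hA q).
  apply: (le_trans (mact_lip _ _ _)).
  by have := edist_ge0 (T p) (T q); rewrite /N; nra.
set C := N * M + 4 * M ^+ 2 * N ^+ 2.
have C0 : 0 <= C by rewrite /C; nra.
exists (1 + r * N + r * C) => s hs G K hG [hK _] [hdK [Gh [hGh [hdGh hdH]]]].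
have N0 : 0 < N by apply: lt_le_trans N1.
have M0 : 0 < M by apply: lt_le_trans M1.
have rN : 0 <= r * N by apply: mulr_ge0; apply: ltW.
have rC : 0 <= r * C by apply: mulr_ge0 => //; apply: ltW.
have s1 : 1 <= s by lra.
have s0 : 0 < s by lra.
set d := diam K in hdK hdH.
have d0 : 0 < d by lra.
have [_ bK] := diam_pos K d0.
set del := s^-1 in hdH.
have del0 : 0 < del by rewrite invr_gt0.
have del1 : del <= 1 by rewrite invf_le1.
have eK' : scale d^-1 K = sc d^-1 @` K by [].
rewrite eK' in hdH.
set K' := sc d^-1 @` K in hdH.
have di0 : 0 < d^-1 by rewrite invr_gt0.
have dK' : diam K' = 1.
  rewrite (@diam_img_eq _ _ d^-1) // ?mulVf ?gt_eqF //.
  by move=> p q; rewrite edist_sc gtr0_norm.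
have [hK' bK'] : K' !=set0 /\ bnd K' by apply: diam_pos; rewrite dK'.
have [hGh0 bGh] : Gh !=set0 /\ bnd Gh by apply: diam_pos; rewrite hdGh.
have cl1 := @dH_lt _ _ _ _ hGh0 bK' hdH.
have cl2 : forall g, Gh g -> exists2 x, K' x & ed g x < del.
  by apply: dH_lt => //; rewrite dH_sym.
set TK := T @` K. set d' := diam TK.
set TK' := T @` K'. set rho := diam TK'.
set TGh := T @` Gh. set ga := diam TGh.
have bTK : bnd TK := bnd_img T M hT1 (ltW M0) bK.
have hTK : TK !=set0 by case: hK => x hx; exists (T x); exists x.
have hTK' : TK' !=set0 by case: hK' => x hx; exists (T x); exists x.
have hTGh : TGh !=set0 by case: hGh0 => x hx; exists (T x); exists x.
have bTK' : bnd TK' := bnd_img T M hT1 (ltW M0) bK'.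
have bTGh : bnd TGh := bnd_img T M hT1 (ltW M0) bGh.
have hrho : rho = d^-1 * d'.
  rewrite /rho /TK' /K' img_sc_comm (@diam_img_eq _ _ d^-1) //.
  by move=> p q; rewrite edist_sc gtr0_norm.
have rhoM : rho <= M by have := diam_img_le T M hT1 (ltW M0) hK' bK'; rewrite dK' mulr1.
have gaM : ga <= M by have := diam_img_le T M hT1 (ltW M0) hGh0 bGh; rewrite hdGh mulr1.
have rhoN : 1 <= N * rho by have := @diam_img_ge _ T N K' hT2 (ltW N0) hK' bTK'; rewrite dK'.
have gaN : 1 <= N * ga by have := @diam_img_ge _ T N Gh hT2 (ltW N0) hGh0 bTGh; rewrite hdGh.
have rho0 : 0 < rho by nra.
have ga0 : 0 < ga by nra.
have cT1 : forall y, TK' y -> exists2 z, TGh z & ed y z <= M * del.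
  move=> _ [x hx <-]; have [g hg hxg] := cl1 x hx.
  exists (T g); first by exists g.
  apply: (le_trans (hT1 x g)); rewrite ler_pM2l //; exact: ltW.
have cT2 : forall z, TGh z -> exists2 y, TK' y & ed z y <= M * del.
  move=> _ [g hg <-]; have [x hx hxg] := cl2 g hg.
  exists (T x); first by exists x.
  apply: (le_trans (hT1 g x)); rewrite ler_pM2l //; exact: ltW.
have rg1 : rho <= ga + M * del + M * del := close_diam (M * del) hTK' bTGh cT1.
have rg2 : ga <= rho + M * del + M * del := close_diam (M * del) hTGh bTK' cT2.
set al := rho^-1. set be := ga^-1.
have al0 : 0 < al by rewrite invr_gt0.
have be0 : 0 < be by rewrite invr_gt0.
have alr : al * rho = 1 by rewrite mulVf ?gt_eqF.
have bega : be * ga = 1 by rewrite mulVf ?gt_eqF.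
have alN : al <= N by nra.
have beN : be <= N by nra.
have hab : `|al - be| <= N ^+ 2 * (M * del + M * del).
  have -> : al - be = al * be * (ga - rho) by rewrite /al /be; field; rewrite ?gt_eqF.
  rewrite normrM ger0_norm; last by apply: mulr_ge0; apply: ltW.
  apply: ler_pM; first by apply: mulr_ge0; apply: ltW.
  - exact: normr_ge0.
  - by rewrite expr2; apply: ler_pM => //; apply: ltW.
  by rewrite ler_norml; apply/andP; split; lra.
case: hK' => x0 hx0.
set P0 := T x0.
set t := (al * P0.1 - be * P0.1, al * P0.2 - be * P0.2).
set L := homot be t @` TGh.
set eps := N * (M * del) + (N ^+ 2 * (M * del + M * del)) * (M * (del + 1)).
have hkey : forall x' g, K' x' -> Gh g -> ed x' g <= del ->
    ed (sc al (T x')) (homot be t (T g)) <= eps.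
  move=> x' g hx' hg hd.
  apply: (le_trans (key_ineq al be (T x') (T g) P0)).
  apply: lerD.
    rewrite ger0_norm; last exact: ltW.
    apply: ler_pM => //; [exact: ltW | exact: edist_ge0 |].
    apply: (le_trans (hT1 x' g)); rewrite ler_pM2l //.
  apply: ler_pM => //; [exact: edist_ge0 | ].
  apply: (le_trans (hT1 g x0)); rewrite ler_pM2l //.
  apply: (le_trans (edist_tri g x' x0)).
  rewrite (edist_sym g x'); have := @diam_ub _ K' x' x0 bK' hx' hx0; rewrite dK'; lra.
have hd' : d' = d * rho by rewrite hrho mulrA mulfV ?gt_eqF ?mul1r.
have hsc : forall x, sc d'^-1 (T x) = sc al (T (sc d^-1 x)).
  move=> x; rewrite /T mact_sc sc_sc; congr (sc _ _).
  by rewrite hd' invfM mulrC.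
have epsC : eps <= C * del.
  have h := mulr_ge0 (mulr_ge0 (sqr_ge0 N) (sqr_ge0 M)) (ltW del0).
  rewrite /eps /C; nra.
have Cdel : C * del < r^-1.
  have h : r * C < s by lra.
  rewrite -(ltr_pM2l hr) -(ltr_pM2r s0).
  have -> : r * (C * del) * s = r * C by rewrite /del; field; rewrite gt_eqF.
  by rewrite mulfV ?gt_eqF // mul1r.
split.
  have h1 : r * N < d' * N by rewrite hd'; nra.
  by rewrite -(ltr_pM2r N0).
exists L; split.
  exists Gh; split => //; exists be, t; split => //.
split.
  rewrite /L (@diam_img_eq _ _ be) //.
  by move=> p q; rewrite edist_homot.
have eS : scale d'^-1 TK = sc d'^-1 @` TK by [].
rewrite eS.
apply: le_lt_trans Cdel; apply: le_trans epsC.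
apply: dH_le.
- by case: hTK => y hy; exists (sc d'^-1 y); exists y.
- by case: hTGh => y hy; exists (homot be t y); exists y.
- move=> _ [_ [x hx <-] <-].
  have hx' : K' (sc d^-1 x) by exists x.
  have [g hg hxg] := cl1 _ hx'.
  exists (homot be t (T g)); first by exists (T g) => //; exists g.
  by rewrite hsc; apply: hkey => //; apply: ltW.
- move=> _ [_ [g hg <-] <-].
  have [_ [x hx <-] hxg] := cl2 g hg.
  exists (sc d'^-1 (T x)); first by exists (T x) => //; exists x.
  rewrite edist_sym hsc; apply: hkey => //; first by exists x.
  by rewrite edist_sym; apply: ltW.
Qed.
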